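(* Let $\mathbb{K}\in\{\mathbb{R},\mathbb{C}\}$, $\mathbf{R}_U\in\mathbb{K}^{n\times n}$ self-adjoint positive definite, $U:=\mathbb{K}^n$ with $\langle\mathbf{x},\mathbf{y}\rangle_U:=\langle\mathbf{R}_U\mathbf{x},\mathbf{y}\rangle$ and norm $\|\cdot\|_U$. Fix $\mu$, $\mathbf{A}(\mu)\in\mathbb{K}^{n\times n}$, $\mathbf{u}(\mu)\in U$, a subspace $U_r\subseteq U$ of dimension $r$ with basis matrix $\mathbf{U}_r\in\mathbb{K}^{n\times r}$, and $\mathbf{\Theta}\in\mathbb{K}^{k\times n}$. Define $\|\mathbf{y}\|_{U_r'}^{\mathbf{\Theta}}:=\max_{\mathbf{x}\in U_r\setminus\{\mathbf{0}\}}|\langle\mathbf{\Theta}\mathbf{R}_U^{-1}\mathbf{y},\mathbf{\Theta}\mathbf{x}\rangle|/\|\mathbf{\Theta}\mathbf{x}\|$, $\alpha_r^{\mathbf{\Theta}}(\mu):=\min_{\mathbf{x}\in U_r\setminus\{\mathbf{0}\}}\|\mathbf{A}(\mu)\mathbf{x}\|_{U_r'}^{\mathbf{\Theta}}/\|\mathbf{x}\|_U$ and $\beta_r^{\mathbf{\Theta}}(\mu):=\max_{\mathbf{x}\in(\mathrm{span}\{\mathbf{u}(\mu)\}+U_r)\setminus\{\mathbf{0}\}}\|\mathbf{A}(\mu)\mathbf{x}\|_{U_r'}^{\mathbf{\Theta}}/\|\mathbf{x}\|_U$. Suppose that for some $\varepsilon\in[0,1)$, $|\langle\mathbf{x},\mathbf{y}\rangle_U-\langle\mathbf{\Theta}\mathbf{x},\mathbf{\Theta}\mathbf{y}\rangle|\le\varepsilon\|\mathbf{x}\|_U\|\mathbf{y}\|_U$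 for all $\mathbf{x},\mathbf{y}\in U_r$, and that $\mathbf{U}_r$ is orthogonal with respect to $\langle\mathbf{x},\mathbf{y}\rangle_U^{\mathbf{\Theta}}:=\langle\mathbf{\Theta}\mathbf{x},\mathbf{\Theta}\mathbf{y}\rangle$, i.e., $(\mathbf{\Theta}\mathbf{U}_r)^{\mathrm{H}}\mathbf{\Theta}\mathbf{U}_r=\mathbf{I}$. Then the condition number of $\mathbf{A}_r(\mu):=\mathbf{U}_r^{\mathrm{H}}\mathbf{\Theta}^{\mathrm{H}}\mathbf{\Theta}\mathbf{R}_U^{-1}\mathbf{A}(\mu)\mathbf{U}_r\in\mathbb{K}^{r\times r}$ is bounded by $\sqrt{\frac{1+\varepsilon}{1-\varepsilon}}\,\frac{\beta_r^{\mathbf{\Theta}}(\mu)}{\alpha_r^{\mathbf{\Theta}}(\mu)}$.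
   Context: $\langle\mathbf{x},\mathbf{y}\rangle=\mathbf{x}^{\mathrm{H}}\mathbf{y}$ is the canonical inner product and $\|\cdot\|$ the Euclidean norm. The condition number of a square matrix is the ratio of its largest to smallest singular value. *)

(* Defs.v *)
From HB Require Import structures.
From mathcomp Require Import all_boot all_order all_algebra.
Set Implicit Arguments. Unset Strict Implicit. Unset Printing Implicit Defensive.
Import Order.TTheory GRing.Theory Num.Theory.
Local Open Scope ring_scope.

Section Prop43.
(* K is the scalar field, [cj] its conjugation (identity over the reals),
   [sq] its square root on nonnegative reals. *)
Variables (K : numFieldType) (cj : K -> K) (sq : K -> K).

Definition adj (m p : nat) (M : 'M[K]_(m, p)) : 'M[K]_(p, m) := map_mx cj M^T.

Definition dot (m : nat) (x y : 'cV[K]_m) : K := \sum_i cj (x i 0) * y i 0.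

Definition enorm (m : nat) (x : 'cV[K]_m) : K := sq (dot x x).

Definition is_max (P : K -> Prop) (m : K) : Prop := P m /\ forall v, P v -> v <= m.
Definition is_min (P : K -> Prop) (m : K) : Prop := P m /\ forall v, P v -> m <= v.

Definition singval (p q : nat) (M : 'M[K]_(p, q)) (s : K) : Prop :=
  0 <= s /\ eigenvalue (adj M *m M) (s ^+ 2).

Definition is_cond (p : nat) (M : 'M[K]_p) (c : K) : Prop :=
  exists smax smin, is_max (singval M) smax /\ is_min (singval M) smin /\
    c = smax / smin.

Variables (n r k : nat) (RU : 'M[K]_n) (Ur : 'M[K]_(n, r)) (Th : 'M[K]_(k, n)).

Definition dotU (x y : 'cV[K]_n) : K := dot (RU *m x) y.
Definition normU (x : 'cV[K]_n) : K := sq (dotU x x).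

Definition inUr (x : 'cV[K]_n) : Prop := exists a : 'cV[K]_r, x = Ur *m a.

Definition is_dualnormTh (y : 'cV[K]_n) (d : K) : Prop :=
  is_max (fun v => exists x, inUr x /\ x != 0 /\
     v = `|dot (Th *m (invmx RU *m y)) (Th *m x)| / enorm (Th *m x)) d.

Definition is_alphaTh (A : 'M[K]_n) (al : K) : Prop :=
  is_min (fun v => exists x, inUr x /\ x != 0 /\
     exists d, is_dualnormTh (A *m x) d /\ v = d / normU x) al.

Definition is_betaTh (A : 'M[K]_n) (u : 'cV[K]_n) (be : K) : Prop :=
  is_max (fun v => exists (c : K) x, inUr x /\ c *: u + x != 0 /\
     exists d, is_dualnormTh (A *m (c *: u + x)) d /\ v = d / normU (c *: u + x)) be.

Definition Ar (A : 'M[K]_n) : 'M[K]_r :=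
  adj Ur *m adj Th *m Th *m invmx RU *m A *m Ur.

End Prop43.

Definition prop43_stmt (K : numFieldType) (cj : K -> K) (sq : K -> K) : Prop :=
  forall (n r k : nat) (RU : 'M[K]_n) (A : 'M[K]_n) (u : 'cV[K]_n)
         (Ur : 'M[K]_(n, r)) (Th : 'M[K]_(k, n)) (eps : K),
    adj cj RU = RU ->
    (forall x : 'cV[K]_n, x != 0 -> 0 < dot cj x (RU *m x)) ->
    \rank Ur = r ->
    0 <= eps < 1 ->
    (forall x y, inUr Ur x -> inUr Ur y ->
       `|dotU cj RU x y - dot cj (Th *m x) (Th *m y)|
         <= eps * normU cj sq RU x * normU cj sq RU y) ->
    adj cj (Th *m Ur) *m (Th *m Ur) = 1%:M ->
    forall (al be kappa : K),
      is_alphaTh cj sq RU Ur Th A al ->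
      is_betaTh cj sq RU Ur Th A u be ->
      is_cond cj (Ar cj RU Ur Th A) kappa ->
      kappa <= sq ((1 + eps) / (1 - eps)) * (be / al).

(* Main.v *)
Require Import Defs.
From mathcomp Require Import all_boot all_order all_algebra.
From mathcomp Require Import ring.
Import Order.TTheory GRing.Theory Num.Theory.
Local Open Scope ring_scope.

Section Gen.
Variables (K : numFieldType) (cj : {rmorphism K -> K}) (sq : K -> K).
Hypothesis cjK : involutive cj.
Hypothesis cjn : forall x, cj x * x = `|x| ^+ 2.
Hypothesis sq_ge0 : forall x, 0 <= x -> 0 <= sq x.
Hypothesis sqK : forall x, 0 <= x -> sq x ^+ 2 = x.

Lemma dotE {m} (x y : 'cV[K]_m) : dot cj x y = (adj cj x *m y) 0 0.
Proof. by rewrite mxE; apply: eq_bigr => i _; rewrite !mxE. Qed.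

Lemma adjM {m p q} (A : 'M[K]_(m,p)) (B : 'M_(p,q)) :
  adj cj (A *m B) = adj cj B *m adj cj A.
Proof. by rewrite /adj trmx_mul map_mxM. Qed.

Lemma adjK {m p} (A : 'M[K]_(m,p)) : adj cj (adj cj A) = A.
Proof. by apply/matrixP => i j; rewrite !mxE cjK. Qed.

Lemma dot_adjl {m p} (M : 'M[K]_(m,p)) x y : dot cj (M *m x) y = dot cj x (adj cj M *m y).
Proof. by rewrite !dotE adjM mulmxA. Qed.

Lemma dot_adjr {m p} (M : 'M[K]_(m,p)) x y : dot cj x (M *m y) = dot cj (adj cj M *m x) y.
Proof. by rewrite dot_adjl adjK. Qed.

Lemma dotDr {m} (x y z : 'cV[K]_m) : dot cj x (y + z) = dot cj x y + dot cj x z.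
Proof. by rewrite !dotE mulmxDr mxE. Qed.
Lemma dotDl {m} (x y z : 'cV[K]_m) : dot cj (x + y) z = dot cj x z + dot cj y z.
Proof. by rewrite /dot -big_split; apply: eq_bigr => i _; rewrite !mxE rmorphD mulrDl. Qed.
Lemma dotZr {m} a (x y : 'cV[K]_m) : dot cj x (a *: y) = a * dot cj x y.
Proof. by rewrite /dot mulr_sumr; apply: eq_bigr => i _; rewrite !mxE mulrCA. Qed.
Lemma dotZl {m} a (x y : 'cV[K]_m) : dot cj (a *: x) y = cj a * dot cj x y.
Proof. by rewrite /dot mulr_sumr; apply: eq_bigr => i _; rewrite !mxE rmorphM mulrA. Qed.
Lemma dotNr {m} (x y : 'cV[K]_m) : dot cj x (- y) = - dot cj x y.
Proof. by rewrite -scaleN1r dotZr mulN1r. Qed.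
Lemma dotNl {m} (x y : 'cV[K]_m) : dot cj (- x) y = - dot cj x y.
Proof. by rewrite -scaleN1r dotZl rmorphN1 mulN1r. Qed.
Lemma dotC {m} (x y : 'cV[K]_m) : dot cj y x = cj (dot cj x y).
Proof. by rewrite /dot rmorph_sum; apply: eq_bigr => i _; rewrite rmorphM cjK mulrC. Qed.
Lemma dot0r {m} (x : 'cV[K]_m) : dot cj x 0 = 0.
Proof. by rewrite -(scale0r 0) dotZr mul0r. Qed.
Lemma dot0l {m} (x : 'cV[K]_m) : dot cj 0 x = 0.
Proof. by rewrite -(scale0r 0) dotZl rmorph0 mul0r. Qed.

Lemma dotxxE {m} (x : 'cV[K]_m) : dot cj x x = \sum_i `|x i 0| ^+ 2.
Proof. by apply: eq_bigr => i _; rewrite cjn. Qed.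
Lemma dotxx_ge0 {m} (x : 'cV[K]_m) : 0 <= dot cj x x.
Proof. by rewrite dotxxE; apply: sumr_ge0 => i _; rewrite exprn_ge0. Qed.
Lemma dotxx_eq0 {m} (x : 'cV[K]_m) : dot cj x x = 0 -> x = 0.
Proof.
rewrite dotxxE => /psumr_eq0P H; apply/matrixP => i j; rewrite (ord1 j) mxE.
have /eqP := H (fun i _ => exprn_ge0 2 (normr_ge0 _)) i isT.
by rewrite expf_eq0 /= normr_eq0 => /eqP.
Qed.
Lemma dotxx_gt0 {m} (x : 'cV[K]_m) : x != 0 -> 0 < dot cj x x.
Proof.
move=> nz; rewrite lt_def dotxx_ge0 andbT; apply/eqP => /dotxx_eq0 H.
by rewrite H eqxx in nz.
Qed.
Lemma cj_dotxx {m} (x : 'cV[K]_m) : cj (dot cj x x) = dot cj x x.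
Proof. by rewrite -dotC. Qed.

Lemma CS {m} (x y : 'cV[K]_m) : `|dot cj x y| ^+ 2 <= dot cj x x * dot cj y y.
Proof.
have [->|nz] := eqVneq x 0.
  by rewrite dot0l normr0 expr0n /= dot0l mul0r.
set N := dot cj x x; set p := dot cj x y.
have Npos : 0 < N := dotxx_gt0 x nz.
have N0 : N != 0 by rewrite gt_eqF.
have cjN : cj N = N := cj_dotxx x.
pose z := y - (p / N) *: x.
have : 0 <= dot cj z z := dotxx_ge0 z.
have -> : dot cj z z = dot cj y y - `|p| ^+ 2 / N.
  rewrite /z dotDl !dotDr !dotNl !dotNr !dotZl !dotZr (dotC x y) -/p -/N.
  rewrite rmorphM fmorphV cjN -cjn.
  by field.
by rewrite subr_ge0 ler_pdivrMr // mulrC.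
Qed.

Lemma eig_tr {n} (g : 'M[K]_n) a : eigenvalue g^T a = eigenvalue g a.
Proof.
by rewrite /eigenvalue /eigenspace /= !kermx_eq0 !row_free_unit -unitmx_tr linearB /= trmxK tr_scalar_mx.
Qed.

Lemma eig_col {n} (g : 'M[K]_n) a : eigenvalue g a -> exists2 w : 'cV_n, w != 0 & g *m w = a *: w.
Proof.
rewrite -eig_tr => /eigenvalueP [v Hv nz]; exists v^T.
  by apply: contra nz => /eqP H; rewrite -(trmxK v) H linear0.
by rewrite -[g]trmxK -trmx_mul Hv linearZ.
Qed.

Lemma col_eig {n} (g : 'M[K]_n) a (w : 'cV_n) : w != 0 -> g *m w = a *: w -> eigenvalue g a.
Proof.
move=> nz Hw; rewrite -eig_tr; apply/eigenvalueP; exists w^T.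
  by rewrite -trmx_mul Hw linearZ.
by apply: contra nz => /eqP H; rewrite -(trmxK w) H linear0.
Qed.
Lemma le_sq_le (x y : K) : 0 <= x -> 0 <= y -> x ^+ 2 <= y ^+ 2 -> x <= y.
Proof. by move=> hx hy; rewrite ler_sqr ?nnegrE. Qed.

Lemma sq_pos (z : K) : 0 < z -> 0 < sq z.
Proof.
move=> zp; rewrite lt_def (sq_ge0 _ (ltW zp)) andbT; apply/eqP => H.
by have := sqK _ (ltW zp); rewrite H expr0n /= => H0; rewrite -H0 ltxx in zp.
Qed.

Lemma enorm_ge0 {m} (x : 'cV[K]_m) : 0 <= enorm cj sq x.
Proof. exact: sq_ge0 _ (dotxx_ge0 x). Qed.
Lemma enormK {m} (x : 'cV[K]_m) : enorm cj sq x ^+ 2 = dot cj x x.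
Proof. exact: sqK _ (dotxx_ge0 x). Qed.
Lemma enorm_pos {m} (x : 'cV[K]_m) : x != 0 -> 0 < enorm cj sq x.
Proof. by move=> nz; apply: sq_pos; apply: dotxx_gt0. Qed.
Lemma enorm_eq0 {m} (x : 'cV[K]_m) : enorm cj sq x = 0 -> x = 0.
Proof. by move=> H; apply: dotxx_eq0; rewrite -enormK H expr0n. Qed.
Lemma enorm0 {m} : enorm cj sq (0 : 'cV[K]_m) = 0.
Proof.
have := enormK (0 : 'cV[K]_m); rewrite dot0l => /eqP; rewrite expf_eq0 /=.
by move/eqP.
Qed.
Lemma gen_main : prop43_stmt cj sq.
Proof.
move=> n r k RU A u Ur Th eps RUsa RUpd rkUr /andP[eps0 eps1] emb orth al be kappa Hal Hbe Hk.
set T := Th *m Ur.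
have adjT : adj cj T = adj cj Ur *m adj cj Th by rewrite adjM.
have dotT : forall a b : 'cV[K]_r, dot cj (T *m a) (T *m b) = dot cj a b.
  by move=> a b; rewrite dot_adjl mulmxA orth mul1mx.
have ThUr : forall a : 'cV[K]_r, Th *m (Ur *m a) = T *m a by move=> a; rewrite mulmxA.
have enT : forall a : 'cV[K]_r, enorm cj sq (T *m a) = enorm cj sq a by move=> a; rewrite /enorm dotT.
have Tinj : forall a : 'cV[K]_r, T *m a = 0 -> a = 0.
  by move=> a Ha; rewrite -[a]mul1mx -orth -mulmxA Ha mulmx0.
have Urnz : forall a : 'cV[K]_r, a != 0 -> Ur *m a != 0.
  move=> a; apply: contra => /eqP H; apply/eqP/Tinj; by rewrite -ThUr H mulmx0.
pose Am := Ar cj RU Ur Th A.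
pose c := fun y : 'cV[K]_n => adj cj T *m (Th *m (invmx RU *m y)).
have cE : forall y, adj cj T *m (Th *m (invmx RU *m y)) = c y by [].
have cAm : forall a : 'cV[K]_r, c (A *m (Ur *m a)) = Am *m a.
  by move=> a; rewrite /c /= adjT /Am /Ar !mulmxA.
have [a0 a0nz] : exists a0 : 'cV[K]_r, Ur *m a0 != 0.
  case: Hal => [[x0 [[a0 ->] [nz0 _]]] _]; by exists a0.
have dualmax : forall y, is_dualnormTh cj sq RU Ur Th y (enorm cj sq (c y)).
  move=> y; split.
    have [cz|cnz] := eqVneq (c y) 0.
      exists (Ur *m a0); split; first by exists a0.
      split; first done.
      by rewrite ThUr dot_adjr cE cz dot0l normr0 mul0r enorm0.
    exists (Ur *m c y); split; first by exists (c y).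
    split; first by apply: Urnz.
    rewrite ThUr dot_adjr cE enT ger0_norm ?dotxx_ge0 // -enormK expr2 mulfK //.
    by rewrite gt_eqF // enorm_pos.
  move=> v [x [[a1 ->] [xnz ->]]].
  have anz : a1 != 0 by apply: contra xnz => /eqP ->; rewrite mulmx0.
  rewrite ThUr dot_adjr cE enT ler_pdivrMr ?enorm_pos //.
  apply: le_sq_le; first by [].
    by rewrite mulr_ge0 ?enorm_ge0.
  by rewrite exprMn !enormK CS.
have dualE : forall y d, is_dualnormTh cj sq RU Ur Th y d -> d = enorm cj sq (c y).
  move=> y d Hd; have Hm := dualmax y; apply/le_anti.
  by rewrite (Hd.2 _ Hm.1) (Hm.2 _ Hd.1).
have NUpos : forall x, x != 0 -> 0 < dotU cj RU x x.
  by move=> x xnz; rewrite /dotU dot_adjl RUsa; apply: RUpd.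
have nUpos : forall x, x != 0 -> 0 < normU cj sq RU x.
  by move=> x xnz; apply: sq_pos; apply: NUpos.
have nUK : forall x, x != 0 -> normU cj sq RU x ^+ 2 = dotU cj RU x x.
  by move=> x xnz; apply: sqK; apply: ltW; apply: NUpos.
have embx : forall a : 'cV[K]_r, a != 0 ->
    dot cj a a <= (1 + eps) * dotU cj RU (Ur *m a) (Ur *m a) /\
    (1 - eps) * dotU cj RU (Ur *m a) (Ur *m a) <= dot cj a a.
  move=> a anz; have xnz := Urnz a anz.
  have := emb (Ur *m a) (Ur *m a) (ex_intro _ a erefl) (ex_intro _ a erefl).
  rewrite !ThUr dotT -mulrA -expr2 nUK //.
  rewrite real_ler_distl; last by rewrite rpredB // ger0_real ?dotxx_ge0 // ltW // NUpos.
  case/andP => h1 h2; split.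
    by rewrite mulrDl mul1r -lerBlDr.
  by rewrite mulrBl mul1r lerBlDr.
have al0 : 0 <= al.
  case: Hal => [[x [_ [xnz [d [Hd ->]]]]] _].
  by rewrite (dualE _ _ Hd) divr_ge0 ?enorm_ge0 // ltW // nUpos.
have be0 : 0 <= be.
  case: Hbe => [[c0 [x [_ [xnz [d [Hd ->]]]]]] _].
  by rewrite (dualE _ _ Hd) divr_ge0 ?enorm_ge0 // ltW // nUpos.
have sing : forall s, singval cj Am s -> exists2 w : 'cV[K]_r, w != 0 &
    dot cj (Am *m w) (Am *m w) = s ^+ 2 * dot cj w w.
  move=> s [_ /eig_col [w wnz Hw]]; exists w => //.
  by rewrite dot_adjl mulmxA Hw dotZr.
have lowb : forall s, singval cj Am s -> al ^+ 2 <= (1 + eps) * s ^+ 2.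
  move=> s Hs; have [w wnz Hw] := sing s Hs.
  have xnz := Urnz w wnz.
  have [e1 e2] := embx w wnz.
  have Hv : al <= enorm cj sq (Am *m w) / normU cj sq RU (Ur *m w).
    apply: Hal.2; exists (Ur *m w); split; first by exists w.
    split => //; exists (enorm cj sq (c (A *m (Ur *m w)))); split; first exact: dualmax.
    by rewrite cAm.
  move: Hv; rewrite ler_pdivlMr ?nUpos // => Hv.
  have h1 : al ^+ 2 * dotU cj RU (Ur *m w) (Ur *m w) <= s ^+ 2 * dot cj w w.
    have hx : 0 <= al * normU cj sq RU (Ur *m w) by rewrite mulr_ge0 // ltW // nUpos.
    rewrite -Hw -enormK -nUK // -exprMn !expr2; exact (ler_pM hx hx Hv Hv).
  rewrite -(ler_pM2r (dotxx_gt0 w wnz)).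
  apply: (le_trans (ler_wpM2l (exprn_ge0 2 al0) e1)).
  have -> : al ^+ 2 * ((1 + eps) * dotU cj RU (Ur *m w) (Ur *m w)) =
     (1 + eps) * (al ^+ 2 * dotU cj RU (Ur *m w) (Ur *m w)) by rewrite mulrCA.
  apply: le_trans (ler_wpM2l _ h1) _; [by rewrite addr_ge0 | by rewrite mulrA lexx].
have upb : forall s, singval cj Am s -> (1 - eps) * s ^+ 2 <= be ^+ 2.
  move=> s Hs; have [w wnz Hw] := sing s Hs.
  have xnz := Urnz w wnz.
  have [e1 e2] := embx w wnz.
  have Hv : enorm cj sq (Am *m w) / normU cj sq RU (Ur *m w) <= be.
    apply: Hbe.2; exists 0, (Ur *m w); rewrite scale0r add0r; split; first by exists w.
    split => //; exists (enorm cj sq (c (A *m (Ur *m w)))); split; first exact: dualmax.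
    by rewrite cAm.
  move: Hv; rewrite ler_pdivrMr ?nUpos // => Hv.
  have h1 : s ^+ 2 * dot cj w w <= be ^+ 2 * dotU cj RU (Ur *m w) (Ur *m w).
    rewrite -Hw -enormK -nUK // -exprMn !expr2; exact (ler_pM (enorm_ge0 _) (enorm_ge0 _) Hv Hv).
  rewrite -(ler_pM2r (dotxx_gt0 w wnz)).
  apply: (le_trans _ (ler_wpM2l (exprn_ge0 2 be0) e2)).
  have -> : be ^+ 2 * ((1 - eps) * dotU cj RU (Ur *m w) (Ur *m w)) =
     (1 - eps) * (be ^+ 2 * dotU cj RU (Ur *m w) (Ur *m w)) by rewrite mulrCA.
  rewrite -mulrA; apply: (ler_wpM2l _ h1); by rewrite subr_ge0 ltW.
case: Hk => smax [smin [Hmax [Hmin ->]]].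
have q0 : 0 <= (1 + eps) / (1 - eps) by apply: divr_ge0; [rewrite addr_ge0 | rewrite subr_ge0 ltW].
have [sm0|smnz] := eqVneq smin 0.
  rewrite sm0 invr0 mulr0; apply: mulr_ge0; [exact: sq_ge0 _ q0 | exact: divr_ge0].
have smpos : 0 < smin by rewrite lt_def smnz Hmin.1.1.
have alnz : al != 0.
  apply/eqP => al_eq0.
  case: Hal => [[x [[a ->] [xnz [d [Hd Hal0]]]]] _].
  have : d / normU cj sq RU (Ur *m a) = 0 by rewrite -Hal0 al_eq0.
  move/eqP; rewrite mulf_eq0 invr_eq0 (gt_eqF (nUpos _ xnz)) orbF => /eqP d0.
  have Ham : Am *m a = 0 by apply: enorm_eq0; rewrite -cAm -(dualE _ _ Hd) d0.
  have anz : a != 0 by apply: contra xnz => /eqP ->; rewrite mulmx0.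
  have : singval cj Am 0.
    split => //; apply: (@col_eig _ _ _ a) => //.
    by rewrite -mulmxA Ham mulmx0 expr0n /= scale0r.
  move/(Hmin.2) => smle.
  by have := lt_le_trans smpos smle; rewrite ltxx.
have alpos : 0 < al by rewrite lt_def alnz al0.
have eps1' : 0 < 1 - eps by rewrite subr_gt0.
have hmin := lowb _ Hmin.1.
have hmax := upb _ Hmax.1.
have sm0' : 0 <= smax := Hmax.1.1.
apply: le_sq_le.
    by rewrite divr_ge0 // ltW.
  apply: mulr_ge0; [exact: sq_ge0 _ q0 | by rewrite divr_ge0 // ltW].
rewrite [X in _ <= X]exprMn (sqK _ q0) !expr_div_n.
have h1 : smax ^+ 2 <= be ^+ 2 / (1 - eps) by rewrite ler_pdivlMr // mulrC.
have h2 : (smin ^+ 2)^-1 <= (1 + eps) / al ^+ 2.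
  rewrite ler_pdivlMr ?exprn_gt0 // mulrC ler_pdivrMr ?exprn_gt0 //.
apply: le_trans (ler_pM _ _ h1 h2) _.
- exact: exprn_ge0.
- by rewrite invr_ge0 exprn_ge0 // ltW.
rewrite le_eqVlt; apply/orP; left; apply/eqP; ring.
Qed.
End Gen.

(* K = R (any real closed field, conjugation = id) and K = C (any numeric
   algebraically closed field, e.g. algC or R[i], with its conjugation). *)
Theorem proposition4p3 :
  (forall R : rcfType, prop43_stmt (fun x : R => x) Num.sqrt) /\
  (forall C : numClosedFieldType, prop43_stmt (fun z : C => z^*) sqrtC).
Proof.
split.
  move=> R.
  refine (@gen_main _ (idfun : {rmorphism R -> R}) Num.sqrt _ _ _ _).
  - by [].
  - by move=> x /=; rewrite real_normK ?num_real // expr2.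
  - by move=> x _; rewrite sqrtr_ge0.
  - by move=> x hx; rewrite sqr_sqrtr.
move=> C.
refine (@gen_main _ (Num.conj : {rmorphism C -> C}) sqrtC _ _ _ _).
- exact: conjCK.
- by move=> x /=; rewrite normCKC.
- by move=> x hx; rewrite sqrtC_ge0.
- by move=> x _; rewrite sqrtCK.
Qed.
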